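(* Let $P_1$ be a set of $n_1$ points and $P_2$ a set of $n_2$ points in the plane, each in general position, with $n_1,n_2$ even, and let $G_1$ and $G_2$ be their underlying graphs. Then there exist a set $P$ of $n_1+n_2$ points in the plane in general position and a partition $P=Q_1\sqcup Q_2$ such that the underlying graph of $P$ is the disjoint union of two graphs on $Q_1$ and $Q_2$, with no edges between $Q_1$ and $Q_2$, that are isomorphic to $G_1$ and $G_2$ respectively.
   Context: Points are in general position if no three are collinear. For a finite set $P$ of $n$ points in general position with $n$ even, a halving line of $P$ is a line through two points of $P$ that has exactly $(n-2)/2$ points of $P$ strictly on each side. The underlying graph of $P$ has vertex set $P$, and two points are adjacent if and only if the line through them is a halving line of $P$. *)

(* Defs.v *)
From HB Require Import structures.
From mathcomp Require Import all_boot all_order all_algebra.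
Set Implicit Arguments. Unset Strict Implicit. Unset Printing Implicit Defensive.
Import Order.TTheory GRing.Theory Num.Theory.
Local Open Scope ring_scope.

Definition point (R : realFieldType) := (R * R)%type.

(* Signed area (orientation) of the triple p q r; zero iff collinear. *)
Definition orient (R : realFieldType) (p q r : point R) : R :=
  (q.1 - p.1) * (r.2 - p.2) - (q.2 - p.2) * (r.1 - p.1).

(* A finite point set is given by a duplicate-free list. General position:
   no three distinct points are collinear. *)
Definition general_position (R : realFieldType) (P : seq (point R)) : Prop :=
  uniq P /\
  forall p q r, p \in P -> q \in P -> r \in P ->
    p != q -> q != r -> p != r -> orient p q r != 0.

(* The line through p and q (p, q in P, distinct) is a halving line of P:
   exactly (n-2)/2 points of P strictly on each side. *)
Definition halving (R : realFieldType) (P : seq (point R)) (p q : point R) : bool :=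
  [&& p \in P, q \in P, p != q,
      count (fun x => 0 < orient p q x) P == ((size P - 2) %/ 2)%N &
      count (fun x => orient p q x < 0) P == ((size P - 2) %/ 2)%N].

(* f is a graph isomorphism from the underlying graph of P1 onto the graph
   induced by the underlying graph of P on the subset Q. *)
Definition iso_onto (R : realFieldType) (P1 P Q : seq (point R))
    (f : point R -> point R) : Prop :=
  {in P1 &, injective f} /\ perm_eq (map f P1) Q /\
  forall a b, a \in P1 -> b \in P1 -> halving P1 a b = halving P (f a) (f b).

(* Main.v *)
Require Import Defs.
From HB Require Import structures.
From mathcomp Require Import all_boot all_order all_algebra.
From mathcomp Require Import ring lra zify.
Import Order.TTheory GRing.Theory Num.Theory.
Local Open Scope ring_scope.

Module Aux.
Set Implicit Arguments. Unset Strict Implicit.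

Definition small (R : realFieldType) (Q : R -> Prop) :=
  exists2 e0 : R, 0 < e0 & forall e, 0 < e -> e <= e0 -> Q e.

Lemma small_and (R : realFieldType) (Q1 Q2 : R -> Prop) :
  small Q1 -> small Q2 -> small (fun e => Q1 e /\ Q2 e).
Proof.
case=> e1 e1p H1 [e2 e2p H2]; exists (Num.min e1 e2); first by rewrite lt_min e1p e2p.
move=> e e0; rewrite le_min => /andP[??]; split; [exact: H1|exact: H2].
Qed.

Lemma small_all (R : realFieldType) (T : eqType) (s : seq T) (Q : T -> R -> Prop) :
  (forall x, x \in s -> small (Q x)) -> small (fun e => forall x, x \in s -> Q x e).
Proof.
elim: s => [|y s IH] H.
  by exists 1 => // e _ _ x; rewrite in_nil.
have [e1 e1p H1] := H y (mem_head _ _).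
have [e2 e2p H2] : small (fun e => forall x, x \in s -> Q x e).
  by apply: IH => x xs; apply: H; rewrite in_cons xs orbT.
exists (Num.min e1 e2); first by rewrite lt_min e1p e2p.
move=> e e0; rewrite le_min => /andP[ee1 ee2] x; rewrite in_cons => /orP[/eqP->|xs].
  exact: H1.
exact: H2.
Qed.

Lemma small_impb (R : realFieldType) (b : bool) (Q : R -> Prop) :
  (b -> small Q) -> small (fun e => b -> Q e).
Proof.
case: b => [H|_]; last by exists 1.
by case: (H isT) => e ep He; exists e => // ? ? ? _; exact: He.
Qed.

Definition sgeq (R : realFieldType) (x c : R) :=
  ((0 < x) = (0 < c)) /\ ((x < 0) = (c < 0)).

Lemma sgeq_neq0 (R : realFieldType) (x c : R) : sgeq x c -> c != 0 -> x != 0.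
Proof.
case=> H1 H2; rewrite neq_lt => /orP[h|h].
  by rewrite -H2 in h; rewrite lt_eqF.
by rewrite -H1 in h; rewrite gt_eqF.
Qed.

Lemma small_sign (R : realFieldType) (F : R -> R) (c0 c1 c2 : R) :
  (forall e, F e = c0 + c1 * e + c2 * e ^+ 2) -> c0 != 0 ->
  small (fun e => sgeq (F e) c0).
Proof.
move=> HF c0n.
set a := `|c1|; set b := `|c2|.
have a0 : 0 <= a by rewrite /a normr_ge0.
have b0 : 0 <= b by rewrite /b normr_ge0.
have K0 : 0 < a + b + 1 by lra.
have c0p : 0 < `|c0| by rewrite normr_gt0.
exists (Num.min 1 (`|c0| / (2 * (a + b + 1)))).
  by rewrite lt_min ltr01 /= divr_gt0 // mulr_gt0.
move=> e e0; rewrite le_min => /andP[e1 e2].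
have hK : (a + b + 1) * e <= `|c0| / 2.
  rewrite ler_pdivlMr // in e2; last by rewrite mulr_gt0.
  rewrite ler_pdivlMr //; nra.
have ha1 : - a <= c1 by have := ler_norm (- c1); rewrite normrN -/a; lra.
have ha2 : c1 <= a by apply: ler_norm.
have hb1 : - b <= c2 by have := ler_norm (- c2); rewrite normrN -/b; lra.
have hb2 : c2 <= b by apply: ler_norm.
have h1 : 0 <= (c1 + a) * e by apply: mulr_ge0; lra.
have h2 : 0 <= (a - c1) * e by apply: mulr_ge0; lra.
have e2p : 0 <= e ^+ 2 by rewrite exprn_ge0 // ltW.
have h3 : 0 <= (c2 + b) * e ^+ 2 by apply: mulr_ge0; lra.
have h4 : 0 <= (b - c2) * e ^+ 2 by apply: mulr_ge0; lra.
have h5 : e ^+ 2 <= e by rewrite expr2 ler_piMl // ltW.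
have h6 : 0 <= b * (e - e ^+ 2) by apply: mulr_ge0; lra.
rewrite /sgeq HF.
case: (ltgtP c0 0) => hc; last by move: c0n; rewrite hc eqxx.
  have hn : `|c0| = - c0 by rewrite ltr0_norm.
  have : c0 + c1 * e + c2 * e ^+ 2 < 0 by rewrite hn in hK; nra.
  by move=> h; rewrite h (lt_gtF h).
have hn : `|c0| = c0 by rewrite gtr0_norm.
have : 0 < c0 + c1 * e + c2 * e ^+ 2 by rewrite hn in hK; nra.
by move=> h; rewrite h (lt_gtF h).
Qed.


Lemma exists_ub (R : realFieldType) (l : seq R) : exists t : R, forall x, x \in l -> `|x| < t.
Proof.
elim: l => [|y l [t Ht]]; first by exists 0.
exists (Num.max t (`|y| + 1)) => x; rewrite in_cons => /orP[/eqP->|xl].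
  by rewrite lt_max; apply/orP; right; lra.
by rewrite lt_max (Ht x xl).
Qed.

Lemma exists_min (R : realFieldType) (l : seq R) : l != [::] ->
  exists2 y, y \in l & forall z, z \in l -> y <= z.
Proof.
elim: l => [//|y l IH] _.
case: l IH => [|y' l] IH.
  by exists y => [|z]; rewrite ?mem_head // in_cons in_nil orbF => /eqP->.
have [m ml Hm] := IH isT.
exists (Num.min y m).
  by rewrite /Num.min; case: ifP => _; rewrite in_cons ?eqxx // ml orbT.
move=> z; rewrite in_cons => /orP[/eqP->|zl]; rewrite ge_min ?lexx //.
by rewrite (Hm z zl) orbT.
Qed.

Lemma threshold (R : realFieldType) (l : seq R) (k : nat) : uniq l -> (k <= size l)%N ->
  exists2 c, c \notin l & count (fun x => x < c) l = k.
Proof.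
move=> ul; elim: k => [_|k IH hk].
  have [t Ht] := exists_ub l.
  exists (- t).
    apply/negP => /Ht; rewrite normrN => h.
    by have := ler_norm t; lra.
  rewrite (eq_in_count (a2 := pred0)) ?count_pred0 // => x /Ht h /=.
  by apply/negbTE; rewrite -leNgt; have := ler_norm (- x); rewrite normrN; lra.
have [c cl Hc] := IH (ltnW hk).
have hne : filter (fun x => c < x) l != [::].
  apply/negP => /eqP h.
  have := count_predC (fun x => x < c) l.
  have -> : count (predC (fun x => x < c)) l = 0%N.
    rewrite (eq_in_count (a2 := pred0)) ?count_pred0 // => x xl /=.
    have : x \notin filter (fun x => c < x) l by rewrite h.
    rewrite mem_filter xl andbT => hcx.
    have xnc : x != c by apply/eqP=> e; move: cl; rewrite -e xl.
    have : x < c by rewrite lt_neqAle xnc /= leNgt.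
    by move=> ->.
  by rewrite Hc addn0 => e; rewrite e ltnn in hk.
have [y yl Hy] := exists_min hne.
move: yl; rewrite mem_filter => /andP[cy yl].
have hne2 : filter (fun x => y < x) l ++ [:: y + 1] != [::] by case: filter.
have [z zl Hz] := exists_min hne2.
have yz : y < z.
  move: zl; rewrite mem_cat mem_filter => /orP[/andP[//]|]; rewrite in_cons in_nil orbF => /eqP->; lra.
exists ((y + z) / 2).
  apply/negP => h.
  have : (y + z) / 2 \in filter (fun x => y < x) l ++ [:: y + 1].
    by rewrite mem_cat mem_filter h andbT; apply/orP; left; lra.
  by move/Hz; lra.
have -> : count (fun x => x < (y + z) / 2) l = count (predU (fun x => x < c) (pred1 y)) l.
  apply: eq_in_count => x xl /=.
  apply/idP/idP.
    move=> h; case: (ltP x c) => //= hxc; apply/eqP.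
    have cx : c < x by rewrite lt_neqAle hxc andbT; apply/eqP => ex; move: cl; rewrite ex xl.
    have : y <= x by apply: Hy; rewrite mem_filter cx.
    rewrite le_eqVlt => /orP[/eqP//|yx].
    have : z <= x by apply: Hz; rewrite mem_cat mem_filter yx xl.
    lra.
  by case/orP => [h|/eqP->]; lra.
have := count_predUI (fun x => x < c) (pred1 y) l.
rewrite Hc (eq_in_count (a1 := predI _ _) (a2 := pred0)) ?count_pred0.
  have := count_uniq_mem y ul; rewrite yl /= => ->; lia.
by move=> x xl /=; apply/negbTE; apply/negP => /andP[h /eqP ey]; rewrite ey in h; have := lt_trans h cy; rewrite ltxx.
Qed.


Definition phi (R : realFieldType) (t s : R) (p : point R) := p.1 + t * p.2 - s.

Lemma normalize (R : realFieldType) (P : seq (point R)) (m : nat) :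
  general_position P -> size P = (m + m)%N ->
  exists t s : R, [/\ {in P &, injective (phi t s)}, (forall p, p \in P -> phi t s p != 0),
     count (fun p => phi t s p < 0) P = m & count (fun p => 0 < phi t s p) P = m].
Proof.
move=> [uP _] sP.
have [t Ht] := exists_ub [seq (q.1 - p.1) / (p.2 - q.2) | p <- P, q <- P].
have inj : {in P &, injective (fun p : point R => p.1 + t * p.2)}.
  move=> [p1 p2] [q1 q2] pP qP /= e.
  have [e2|ne2] := eqVneq p2 q2.
    by rewrite e2 in e *; congr pair; lra.
  have := Ht _ (allpairs_f (fun p q : point R => (q.1 - p.1) / (p.2 - q.2)) pP qP).
  have -> : (q1 - p1) / (p2 - q2) = t.
    have hd : p2 - q2 != 0 by rewrite subr_eq0.
    by apply: (mulIf hd); rewrite mulfVK //; lra.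
  by rewrite ltNge ler_norm.
have hsz : (m <= size (map (fun p : point R => (p.1 + t * p.2)%R) P))%N by rewrite size_map sP leq_addr.
have [s sl Hs] := @threshold R (map (fun p : point R => p.1 + t * p.2) P) m
  (etrans (map_inj_in_uniq inj) uP) hsz.
have nz : forall p, p \in P -> phi t s p != 0.
  move=> p pP; apply/eqP => h; move: sl.
  have -> : s = p.1 + t * p.2 by rewrite /phi in h; lra.
  by rewrite (map_f (fun p : point R => p.1 + t * p.2) pP).
have cneg : count (fun p => phi t s p < 0) P = m.
  by rewrite -Hs count_map; apply: eq_count => p /=; rewrite /phi subr_lt0.
exists t, s; split => //.
  by move=> p q pP qP /= e; apply: inj => //=; rewrite /phi in e; lra.
have := count_predC (fun p => phi t s p < 0) P.
rewrite cneg sP (eq_in_count (a1 := predC _) (a2 := fun p => 0 < phi t s p)); first by move/eqP; rewrite eqn_add2l => /eqP.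
move=> p pP /=; have := nz p pP; rewrite -leNgt; case: ltgtP => //.
Qed.


Definition fA (R : realFieldType) (t s e : R) (p : point R) : point R := (phi t s p, e * p.2).
Definition gB (R : realFieldType) (t s e : R) (p : point R) : point R := (- (e * p.2), phi t s p).

Definition Gall (R : realFieldType) (P1 P2 : seq (point R)) (t1 s1 t2 s2 e : R) :=
  (forall p, p \in P1 -> forall q, q \in P1 -> p != q -> forall r, r \in P2 ->
     sgeq (orient (fA t1 s1 e p) (fA t1 s1 e q) (gB t2 s2 e r))
          ((phi t1 s1 q - phi t1 s1 p) * phi t2 s2 r)) /\
  (forall p, p \in P2 -> forall q, q \in P2 -> p != q -> forall r, r \in P1 ->
     sgeq (orient (gB t2 s2 e p) (gB t2 s2 e q) (fA t1 s1 e r))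
          (- (phi t2 s2 q - phi t2 s2 p) * phi t1 s1 r)) /\
  (forall p, p \in P1 -> forall q, q \in P2 -> forall r, r \in P1 -> r != p ->
     sgeq (orient (fA t1 s1 e p) (gB t2 s2 e q) (fA t1 s1 e r))
          (- phi t2 s2 q * (phi t1 s1 r - phi t1 s1 p))) /\
  (forall p, p \in P1 -> forall q, q \in P2 -> forall r, r \in P2 -> r != q ->
     sgeq (orient (fA t1 s1 e p) (gB t2 s2 e q) (gB t2 s2 e r))
          (phi t1 s1 p * (phi t2 s2 q - phi t2 s2 r))) /\
  (forall p, p \in P1 -> forall q, q \in P2 -> sgeq (phi t1 s1 p + q.2 * e) (phi t1 s1 p)).

Lemma choose_e (R : realFieldType) (P1 P2 : seq (point R)) (t1 s1 t2 s2 : R) :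
  {in P1 &, injective (phi t1 s1)} -> (forall p, p \in P1 -> phi t1 s1 p != 0) ->
  {in P2 &, injective (phi t2 s2)} -> (forall p, p \in P2 -> phi t2 s2 p != 0) ->
  exists e, 0 < e /\ Gall P1 P2 t1 s1 t2 s2 e.
Proof.
move=> i1 n1 i2 n2.
have ne1 : forall p q, p \in P1 -> q \in P1 -> p != q -> phi t1 s1 q - phi t1 s1 p != 0.
  move=> p q pP qP pq; rewrite subr_eq0; apply/eqP => h; move/eqP: pq; apply.
  exact: i1 (esym h).
have ne2 : forall p q, p \in P2 -> q \in P2 -> p != q -> phi t2 s2 q - phi t2 s2 p != 0.
  move=> p q pP qP pq; rewrite subr_eq0; apply/eqP => h; move/eqP: pq; apply.
  exact: i2 (esym h).
have : small (Gall P1 P2 t1 s1 t2 s2).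
  apply: small_and.
    apply: small_all => p pP; apply: small_all => q qP; apply: small_impb => pq.
    apply: small_all => r rP.
    apply: (@small_sign R (fun e => orient (fA t1 s1 e p) (fA t1 s1 e q) (gB t2 s2 e r)) _
      (- (phi t1 s1 q - phi t1 s1 p) * p.2 + (q.2 - p.2) * phi t1 s1 p)
      ((q.2 - p.2) * r.2)).
      by move=> e; rewrite /orient /fA /gB /=; ring.
    by rewrite mulf_neq0 ?ne1 ?n2.
  apply: small_and.
    apply: small_all => p pP; apply: small_all => q qP; apply: small_impb => pq.
    apply: small_all => r rP.
    apply: (@small_sign R (fun e => orient (gB t2 s2 e p) (gB t2 s2 e q) (fA t1 s1 e r)) _
      ((q.2 - p.2) * phi t2 s2 p - (phi t2 s2 q - phi t2 s2 p) * p.2)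
      (- (q.2 - p.2) * r.2)).
      by move=> e; rewrite /orient /fA /gB /=; ring.
    by rewrite mulf_neq0 ?oppr_eq0 ?ne2 ?n1.
  apply: small_and.
    apply: small_all => p pP; apply: small_all => q qP; apply: small_all => r rP.
    apply: small_impb => rp.
    apply: (@small_sign R (fun e => orient (fA t1 s1 e p) (gB t2 s2 e q) (fA t1 s1 e r)) _
      (- phi t1 s1 p * (r.2 - p.2) + p.2 * (phi t1 s1 r - phi t1 s1 p))
      (- q.2 * (r.2 - p.2))).
      by move=> e; rewrite /orient /fA /gB /=; ring.
    by rewrite mulf_neq0 ?oppr_eq0 ?ne1 ?n2 // eq_sym.
  apply: small_and.
    apply: small_all => p pP; apply: small_all => q qP; apply: small_all => r rP.
    apply: small_impb => rq.
    apply: (@small_sign R (fun e => orient (fA t1 s1 e p) (gB t2 s2 e q) (gB t2 s2 e r)) _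
      (r.2 * phi t2 s2 q - q.2 * phi t2 s2 r)
      (p.2 * (q.2 - r.2))).
      by move=> e; rewrite /orient /fA /gB /=; ring.
    by rewrite mulf_neq0 ?ne2 ?n1.
  apply: small_all => p pP; apply: small_all => q qP.
  apply: (@small_sign R (fun e => phi t1 s1 p + q.2 * e) _ q.2 0).
    by move=> e; ring.
  exact: n1.
case=> e e0 He; exists e; split => //; exact: He.
Qed.


Lemma half_eq (m1 m2 c : nat) : (0 < m1)%N ->
  (c + m2 == ((m1 + m1) + (m2 + m2) - 2) %/ 2)%N = (c == (m1 + m1 - 2) %/ 2)%N.
Proof. by move=> h; apply/eqP/eqP; lia. Qed.

Lemma half_eq2 (m1 m2 c : nat) : (0 < m2)%N ->
  (m1 + c == ((m1 + m1) + (m2 + m2) - 2) %/ 2)%N = (c == (m2 + m2 - 2) %/ 2)%N.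
Proof. by move=> h; apply/eqP/eqP; lia. Qed.

Lemma count_sign_mul (R : realFieldType) (T : Type) (d : R) (f : T -> R) s m :
  d != 0 -> count (fun x => f x < 0) s = m -> count (fun x => 0 < f x) s = m ->
  count (fun x => 0 < d * f x) s = m /\ count (fun x => d * f x < 0) s = m.
Proof.
move=> dn cn cp; case: (ltgtP d 0) => hd; last by rewrite hd eqxx in dn.
  split; [rewrite -cn | rewrite -cp]; apply: eq_count => x /=.
    by rewrite nmulr_rgt0.
  by rewrite nmulr_rlt0.
split; [rewrite -cp | rewrite -cn]; apply: eq_count => x /=.
  by rewrite pmulr_rgt0.
by rewrite pmulr_rlt0.
Qed.

Lemma orient_fA (R : realFieldType) (t s e : R) p q r :
  orient (fA t s e p) (fA t s e q) (fA t s e r) = e * orient p q r.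
Proof. by rewrite /orient /fA /phi /=; ring. Qed.

Lemma orient_gB (R : realFieldType) (t s e : R) p q r :
  orient (gB t s e p) (gB t s e q) (gB t s e r) = e * orient p q r.
Proof. by rewrite /orient /gB /phi /=; ring. Qed.

Lemma orient_cyc (R : realFieldType) (p q r : point R) : orient p q r = orient q r p.
Proof. by rewrite /orient; ring. Qed.

Lemma orient_aba (R : realFieldType) (p q : point R) : orient p q p = 0.
Proof. by rewrite /orient; ring. Qed.

Lemma halve_contra (m1 m2 a b : nat) : (0 < m1)%N -> (m1 <= a)%N -> (m2 <= b)%N ->
  (a + b)%N = ((m1 + m1 + (m2 + m2) - 2) %/ 2)%N -> False.
Proof. move=> *; lia. Qed.


Lemma construction (R : realFieldType) (P1 P2 : seq (point R)) (m1 m2 : nat)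
  (t1 s1 t2 s2 e : R) :
  general_position P1 -> general_position P2 ->
  size P1 = (m1 + m1)%N -> size P2 = (m2 + m2)%N ->
  {in P1 &, injective (phi t1 s1)} -> (forall p, p \in P1 -> phi t1 s1 p != 0) ->
  count (fun p => phi t1 s1 p < 0) P1 = m1 -> count (fun p => 0 < phi t1 s1 p) P1 = m1 ->
  {in P2 &, injective (phi t2 s2)} -> (forall p, p \in P2 -> phi t2 s2 p != 0) ->
  count (fun p => phi t2 s2 p < 0) P2 = m2 -> count (fun p => 0 < phi t2 s2 p) P2 = m2 ->
  0 < e -> Gall P1 P2 t1 s1 t2 s2 e ->
  let f := fA t1 s1 e in let g := gB t2 s2 e in
  let P := map f P1 ++ map g P2 in
  [/\ general_position P,
    (forall a b, a \in map f P1 -> b \in map g P2 -> ~~ halving P a b),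
    iso_onto P1 P (map f P1) f &
    iso_onto P2 P (map g P2) g].
Proof.
move=> gp1 gp2 sP1 sP2 i1 n1 cn1 cp1 i2 n2 cn2 cp2 e0 [G1 [G2 [G3 [G4 G6]]]] f g P.
have ne1 : forall p q, p \in P1 -> q \in P1 -> p != q -> phi t1 s1 q - phi t1 s1 p != 0.
  move=> p q pP qP pq; rewrite subr_eq0; apply/eqP => h; move/eqP: pq; apply.
  exact: i1 (esym h).
have ne2 : forall p q, p \in P2 -> q \in P2 -> p != q -> phi t2 s2 q - phi t2 s2 p != 0.
  move=> p q pP qP pq; rewrite subr_eq0; apply/eqP => h; move/eqP: pq; apply.
  exact: i2 (esym h).
have injf : {in P1 &, injective f}.
  by move=> p q pP qP /(congr1 fst) /= h; apply: i1.
have injg : {in P2 &, injective g}.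
  by move=> p q pP qP /(congr1 snd) /= h; apply: i2.
have disj : forall p q, p \in P1 -> q \in P2 -> f p != g q.
  move=> p q pP qP; apply/negP => /eqP /(congr1 fst); rewrite /= => h.
  have := sgeq_neq0 (G6 p pP q qP) (n1 p pP).
  by rewrite h (mulrC q.2) addNr eqxx.
have fneq : forall a b, f a != f b -> a != b by move=> a b; apply: contra => /eqP->.
have gneq : forall a b, g a != g b -> a != b by move=> a b; apply: contra => /eqP->.
have en : e != 0 by rewrite gt_eqF.
split.
- split.
    rewrite cat_uniq !map_inj_in_uniq // gp1.1 gp2.1 /= andbT.
    apply/hasPn => y /mapP[q qP ->]; apply/mapP => [[p pP /eqP]].
    by rewrite eq_sym (negbTE (disj _ _ pP qP)).
  move=> p q r; rewrite !mem_cat.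
  move=> /orP[/mapP[a aP ->]|/mapP[a aP ->]] /orP[/mapP[b bP ->]|/mapP[b bP ->]]
         /orP[/mapP[c cP ->]|/mapP[c cP ->]] hab hbc hac.
  + rewrite orient_fA mulf_neq0 //.
    exact: gp1.2 _ _ _ aP bP cP (fneq _ _ hab) (fneq _ _ hbc) (fneq _ _ hac).
  + apply: (sgeq_neq0 (G1 a aP b bP (fneq _ _ hab) c cP)).
    by rewrite mulf_neq0 ?(ne1 _ _ aP bP (fneq _ _ hab)) ?n2.
  + have ca : c != a by rewrite eq_sym (fneq _ _ hac).
    apply: (sgeq_neq0 (G3 a aP b bP c cP ca)).
    by rewrite mulf_neq0 ?oppr_eq0 ?n2 ?(ne1 _ _ aP cP (fneq _ _ hac)).
  + have cb : c != b by rewrite eq_sym (gneq _ _ hbc).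
    apply: (sgeq_neq0 (G4 a aP b bP c cP cb)).
    by rewrite mulf_neq0 ?n1 ?(ne2 _ _ cP bP cb).
  + rewrite orient_cyc; apply: (sgeq_neq0 (G1 b bP c cP (fneq _ _ hbc) a aP)).
    by rewrite mulf_neq0 ?(ne1 _ _ bP cP (fneq _ _ hbc)) ?n2.
  + have ac : a != c by exact: (gneq _ _ hac).
    rewrite orient_cyc; apply: (sgeq_neq0 (G4 b bP c cP a aP ac)).
    by rewrite mulf_neq0 ?n1 ?(ne2 _ _ aP cP ac).
  + apply: (sgeq_neq0 (G2 a aP b bP (gneq _ _ hab) c cP)).
    by rewrite mulf_neq0 ?oppr_eq0 ?(ne2 _ _ aP bP (gneq _ _ hab)) ?n1.
  + rewrite orient_gB mulf_neq0 //.
    exact: gp2.2 _ _ _ aP bP cP (gneq _ _ hab) (gneq _ _ hbc) (gneq _ _ hac).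
- move=> _ _ /mapP[p pP ->] /mapP[q qP ->].
  have cpos : count (fun x => 0 < orient (f p) (g q) x) P =
     addn (count (fun r => 0 < - phi t2 s2 q * (phi t1 s1 r - phi t1 s1 p)) P1)
      (count (fun r => 0 < phi t1 s1 p * (phi t2 s2 q - phi t2 s2 r)) P2).
    rewrite count_cat !count_map; congr addn; apply: eq_in_count => r rP /=.
      case: (eqVneq r p) => [->|rp]; first by rewrite orient_aba subrr mulr0 ltxx.
      exact: (G3 p pP q qP r rP rp).1.
    case: (eqVneq r q) => [->|rq]; first by rewrite -orient_cyc orient_aba subrr mulr0 ltxx.
    exact: (G4 p pP q qP r rP rq).1.
  have cneg : count (fun x => orient (f p) (g q) x < 0) P =
     addn (count (fun r => - phi t2 s2 q * (phi t1 s1 r - phi t1 s1 p) < 0) P1)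
      (count (fun r => phi t1 s1 p * (phi t2 s2 q - phi t2 s2 r) < 0) P2).
    rewrite count_cat !count_map; congr addn; apply: eq_in_count => r rP /=.
      case: (eqVneq r p) => [->|rp]; first by rewrite orient_aba subrr mulr0 ltxx.
      exact: (G3 p pP q qP r rP rp).2.
    case: (eqVneq r q) => [->|rq]; first by rewrite -orient_cyc orient_aba subrr mulr0 ltxx.
    exact: (G4 p pP q qP r rP rq).2.
  have m1p : (0 < m1)%N by move: pP sP1; case: (P1) => //= ? ? _; lia.
  rewrite /halving; apply/negP => /and5P[_ _ _ /eqP h1 /eqP h2].
  rewrite cpos size_cat !size_map sP1 sP2 in h1.
  rewrite cneg size_cat !size_map sP1 sP2 in h2.
  have := n1 p pP; have := n2 q qP; rewrite !neq_lt => /orP[hq|hq] /orP[hp|hp].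
  + have hA : leq m1 (count (fun r => 0 < - phi t2 s2 q * (phi t1 s1 r - phi t1 s1 p)) P1).
      rewrite -cp1; apply: sub_count => r /= hr.
      by rewrite mulr_gt0 ?oppr_gt0 // subr_gt0 (lt_trans hp hr).
    have hB : leq m2 (count (fun r => 0 < phi t1 s1 p * (phi t2 s2 q - phi t2 s2 r)) P2).
      rewrite -cp2; apply: sub_count => r /= hr.
      by rewrite nmulr_rgt0 // subr_lt0 (lt_trans hq hr).
    exact: halve_contra m1p hA hB h1.
  + have hA : leq m1 (count (fun r => - phi t2 s2 q * (phi t1 s1 r - phi t1 s1 p) < 0) P1).
      rewrite -cn1; apply: sub_count => r /= hr.
      by rewrite pmulr_rlt0 ?oppr_gt0 // subr_lt0 (lt_trans hr hp).
    have hB : leq m2 (count (fun r => phi t1 s1 p * (phi t2 s2 q - phi t2 s2 r) < 0) P2).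
      rewrite -cp2; apply: sub_count => r /= hr.
      by rewrite pmulr_rlt0 // subr_lt0 (lt_trans hq hr).
    exact: halve_contra m1p hA hB h2.
  + have hA : leq m1 (count (fun r => - phi t2 s2 q * (phi t1 s1 r - phi t1 s1 p) < 0) P1).
      rewrite -cp1; apply: sub_count => r /= hr.
      by rewrite nmulr_rlt0 ?oppr_lt0 // subr_gt0 (lt_trans hp hr).
    have hB : leq m2 (count (fun r => phi t1 s1 p * (phi t2 s2 q - phi t2 s2 r) < 0) P2).
      rewrite -cn2; apply: sub_count => r /= hr.
      by rewrite nmulr_rlt0 // subr_gt0 (lt_trans hr hq).
    exact: halve_contra m1p hA hB h2.
  + have hA : leq m1 (count (fun r => 0 < - phi t2 s2 q * (phi t1 s1 r - phi t1 s1 p)) P1).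
      rewrite -cn1; apply: sub_count => r /= hr.
      by rewrite nmulr_rgt0 ?oppr_lt0 // subr_lt0 (lt_trans hr hp).
    have hB : leq m2 (count (fun r => 0 < phi t1 s1 p * (phi t2 s2 q - phi t2 s2 r)) P2).
      rewrite -cn2; apply: sub_count => r /= hr.
      by rewrite pmulr_rgt0 // subr_gt0 (lt_trans hr hq).
    exact: halve_contra m1p hA hB h1.
- split; first exact: injf.
  split; first exact: perm_refl.
  move=> a b aP bP.
  have m1p : (0 < m1)%N by move: aP sP1; case: (P1) => //= ? ? _; lia.
  rewrite /halving aP bP !mem_cat !map_f //= (inj_in_eq injf) //.
  case: (eqVneq a b) => [_|ab] //=.
  have [H1 H2] := count_sign_mul (ne1 a b aP bP ab) cn2 cp2.
  have cposf : count (fun x => 0 < orient (f a) (f b) x) P =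
      addn (count (fun x => 0 < orient a b x) P1) m2.
    rewrite count_cat !count_map; congr addn.
      by apply: eq_count => r /=; rewrite orient_fA pmulr_rgt0.
    rewrite -H1; apply: eq_in_count => r rP /=; exact: (G1 a aP b bP ab r rP).1.
  have cnegf : count (fun x => orient (f a) (f b) x < 0) P =
      addn (count (fun x => orient a b x < 0) P1) m2.
    rewrite count_cat !count_map; congr addn.
      by apply: eq_count => r /=; rewrite orient_fA pmulr_rlt0.
    rewrite -H2; apply: eq_in_count => r rP /=; exact: (G1 a aP b bP ab r rP).2.
  by rewrite cposf cnegf size_cat !size_map sP1 sP2 !half_eq.
- split; first exact: injg.
  split; first exact: perm_refl.
  move=> a b aP bP.
  have m2p : (0 < m2)%N by move: aP sP2; case: (P2) => //= ? ? _; lia.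
  rewrite /halving aP bP !mem_cat !map_f ?orbT //= (inj_in_eq injg) //.
  case: (eqVneq a b) => [_|ab] //=.
  have nd : - (phi t2 s2 b - phi t2 s2 a) != 0 by rewrite oppr_eq0 ne2.
  have [H1 H2] := count_sign_mul nd cn1 cp1.
  have cposg : count (fun x => 0 < orient (g a) (g b) x) P =
      addn m1 (count (fun x => 0 < orient a b x) P2).
    rewrite count_cat !count_map; congr addn.
      rewrite -H1; apply: eq_in_count => r rP /=; exact: (G2 a aP b bP ab r rP).1.
    by apply: eq_count => r /=; rewrite orient_gB pmulr_rgt0.
  have cnegg : count (fun x => orient (g a) (g b) x < 0) P =
      addn m1 (count (fun x => orient a b x < 0) P2).
    rewrite count_cat !count_map; congr addn.
      rewrite -H2; apply: eq_in_count => r rP /=; exact: (G2 a aP b bP ab r rP).2.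
    by apply: eq_count => r /=; rewrite orient_gB pmulr_rlt0.
  by rewrite cposg cnegg size_cat !size_map sP1 sP2 !half_eq2.
Qed.

End Aux.
Import Aux.

Theorem mainTheorem1 (R : realFieldType) (P1 P2 : seq (point R)) :
  general_position P1 -> general_position P2 ->
  ~~ odd (size P1) -> ~~ odd (size P2) ->
  exists (P Q1 Q2 : seq (point R)),
    general_position P /\
    size P = (size P1 + size P2)%N /\
    perm_eq P (Q1 ++ Q2) /\
    (forall a b, a \in Q1 -> b \in Q2 -> ~~ halving P a b) /\
    (exists f, iso_onto P1 P Q1 f) /\
    (exists g, iso_onto P2 P Q2 g).
Proof.
move=> gp1 gp2 o1 o2.
have [m1 sP1] : exists m, size P1 = (m + m)%N.
  by exists (size P1)./2; have := odd_double_half (size P1); rewrite (negbTE o1) add0n -addnn.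
have [m2 sP2] : exists m, size P2 = (m + m)%N.
  by exists (size P2)./2; have := odd_double_half (size P2); rewrite (negbTE o2) add0n -addnn.
have [t1 [s1 [i1 n1 cn1 cp1]]] := normalize gp1 sP1.
have [t2 [s2 [i2 n2 cn2 cp2]]] := normalize gp2 sP2.
have [e [e0 G]] := choose_e i1 n1 i2 n2.
have := construction gp1 gp2 sP1 sP2 i1 n1 cn1 cp1 i2 n2 cn2 cp2 e0 G.
move=> /= [gp mix isf isg].
exists (map (fA t1 s1 e) P1 ++ map (gB t2 s2 e) P2), (map (fA t1 s1 e) P1), (map (gB t2 s2 e) P2).
split => //; split; first by rewrite size_cat !size_map.
split; first exact: perm_refl.
split => //; split; [by exists (fA t1 s1 e) | by exists (gB t2 s2 e)].
Qed.
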